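(* Let $E$ and $F$ be complex Banach spaces, let $A_m:\mathrm{dom}(A_m)\subseteq E\to E$ and $B:\mathrm{dom}(B)\subseteq F\to F$ be linear operators, and let $L:\mathrm{dom}(A_m)\to F$ be linear, surjective and bounded with respect to the graph norm of $A_m$. Assume that the restriction $A_0$ of $A_m$ to $\ker(L)$ generates a bounded analytic semigroup $(T_0(t))_{t\ge0}$ on $E$, that $B$ generates a strongly continuous semigroup $(S(t))_{t\ge0}$ on $F$, that $x\mapsto(A_mx,Lx)$, $\mathrm{dom}(A_m)\to E\times F$, is closed, and that $A_0$ and $B$ are boundedly invertible. Let $D_0:=(L|_{\ker(A_m)})^{-1}:F\to E$. Assume moreover that for $y\in\mathrm{dom}(B)$ and $t\ge0$ the operators $Q(t)y=D_0S(t)y-T_0(t)D_0y-\int_0^tT_0(t-s)D_0S(s)By\,\mathrm{d}s$ extend to bounded operators $F\to E$ with $\limsup_{t\downarrow0}\|Q(t)\|<\infty$. Then for every $t_{\max}>0$ there is $C\ge0$ such that for every $h\in[0,t_{\max}]$, every $s_0,s_1\in[0,h]$ and every $y\in\mathrm{dom}(B^2)$, \[ \Bigl\|\int_0^hT_0(h-s)A_0^{-1}D_0S(s)By\,\mathrm{d}s-hT_0(h-s_0)A_0^{-1}D_0S(s_1)By\Bigr\|\le Ch^2\bigl(\|By\|+\|B^2y\|\bigr). \]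
   Context: Under the stated assumptions $L|_{\ker(A_m)}$ is bijective onto $F$ and $D_0$ is a bounded operator $F\to E$. *)

(* Defs.v *)
From HB Require Import structures.
From mathcomp Require Import all_boot all_order all_algebra.
From mathcomp Require Import complex.
From mathcomp Require Import all_classical all_reals all_analysis.
Import Order.TTheory GRing.Theory Num.Theory.
Import numFieldNormedType.Exports.

Set Implicit Arguments.
Unset Strict Implicit.
Unset Printing Implicit Defensive.

Local Open Scope classical_set_scope.
Local Open Scope ring_scope.
Local Open Scope complex_scope.

Section Defs.
Variable R : realType.

Section Ops.
Variables U V : normedModType R[i].

Definition linear_map (f : U -> V) : Prop :=
  forall (a : R[i]) (x y : U), f (a *: x + y) = a *: f x + f y.

Definition bounded_op (f : U -> V) : Prop :=
  linear_map f /\ exists M : R, forall x, `|f x| <= M%:C * `|x|.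

Definition lin_subspace (D : set U) : Prop :=
  D 0 /\ forall (a : R[i]) x y, D x -> D y -> D (a *: x + y).

(* f is linear on the subspace D (an operator with domain D) *)
Definition linear_on (D : set U) (f : U -> V) : Prop :=
  forall (a : R[i]) x y, D x -> D y -> f (a *: x + y) = a *: f x + f y.
End Ops.

Section Semigroups.
Variable E : completeNormedModType R[i].

Definition C0_semigroup (T : R -> E -> E) : Prop :=
  [/\ (forall t, 0 <= t -> bounded_op (T t)),
      (forall x, T 0 x = x),
      (forall t s x, 0 <= t -> 0 <= s -> T (t + s) x = T t (T s x)) &
      (forall x, (fun t => T t x) @ at_right 0 --> x)].

Definition generates (D : set E) (A : E -> E) (T : R -> E -> E) : Prop :=
  C0_semigroup T /\
  forall x,
    (D x <-> exists y : E, (fun h : R => (h^-1)%:C *: (T h x - x)) @ at_right 0 --> y)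
    /\ (D x -> (fun h : R => (h^-1)%:C *: (T h x - x)) @ at_right 0 --> A x).

Definition sector (d : R) : set R[i]^o :=
  [set z | exists r th : R, [/\ 0 < r, `|th| < d & z = (r * cos th) +i* (r * sin th)]].

(* bounded analytic semigroup (Engel-Nagel, Def. II.4.5): T extends to a
   (strongly) holomorphic semigroup on a sector Sigma_d, 0 < d <= pi/2,
   strongly continuous at 0 and bounded on every smaller sector. *)
Definition bounded_analytic (T : R -> E -> E) : Prop :=
  exists d : R, 0 < d <= pi / 2 /\
  exists Tc : R[i]^o -> E -> E,
  [/\ (forall t x, 0 <= t -> Tc (t%:C : R[i]^o) x = T t x),
      (forall z, sector d z -> linear_map (Tc z)),
      (forall z1 z2 x, sector d z1 -> sector d z2 -> Tc (z1 + z2) x = Tc z1 (Tc z2 x)),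
      (forall z x, sector d z -> derivable (fun w => Tc w x) z 1) &
      (forall d' x, 0 < d' < d ->
          (fun w => Tc w x) @ within (sector d') (nbhs (0 : R[i]^o)) --> x)] /\
      (forall d', 0 < d' < d -> exists M : R,
          forall z x, sector d' z -> `|Tc z x| <= M%:C * `|x|).

(* E-valued integral over [a, b]: limit of (left) Riemann sums on uniform
   partitions.  For continuous integrands this is the Riemann/Bochner integral. *)
Definition riemann_sum (f : R -> E) (a b : R) (n : nat) : E :=
  \sum_(k < n.+1) (((b - a) / n.+1%:R)%:C *: f (a + (b - a) * k%:R / n.+1%:R)).

Definition vintegral (f : R -> E) (a b : R) : E := limn (riemann_sum f a b).
End Semigroups.
End Defs.

(* Main.v *)
Require Import Defs.
From HB Require Import structures.
From mathcomp Require Import all_boot all_order all_algebra.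
From mathcomp Require Import complex.
From mathcomp Require Import all_classical all_reals all_analysis.
From mathcomp Require Import ring lra zify.
Import Order.TTheory GRing.Theory Num.Theory.
Import numFieldNormedType.Exports.
Local Open Scope classical_set_scope.
Local Open Scope ring_scope.
Local Open Scope complex_scope.

Set Implicit Arguments.
Unset Strict Implicit.
Section NR.
Variable R : realType.
Variable V : normedModType R[i].
Definition nr (x : V) : R := complex.Re `|x|.

Lemma realC_norm (z : R[i]) : 0 <= z -> z = (complex.Re z)%:C.
Proof. by case: z => a b; rewrite lecE /= => /andP[/eqP -> _]. Qed.

Lemma normE (x : V) : `|x| = (nr x)%:C.
Proof. exact/realC_norm/normr_ge0. Qed.

Lemma nr_ge0 (x : V) : 0 <= nr x.
Proof. by rewrite -ler0c -normE. Qed.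

Lemma addC (a b : R) : (a + b)%:C = a%:C + b%:C :> R[i].
Proof. by rewrite rmorphD. Qed.
Lemma mulC (a b : R) : (a * b)%:C = a%:C * b%:C :> R[i].
Proof. by rewrite rmorphM. Qed.

Lemma nrD (x y : V) : nr (x + y) <= nr x + nr y.
Proof. by rewrite -lecR addC -!normE ler_normD. Qed.

Lemma nrN (x : V) : nr (- x) = nr x.
Proof. by rewrite /nr normrN. Qed.

Lemma nrB (x y : V) : nr (x - y) = nr (y - x).
Proof. by rewrite /nr distrC. Qed.

Lemma normCr (r : R) : `|r%:C| = `|r|%:C.
Proof. by rewrite normc_def /= expr0n /= addr0 sqrtr_sqr. Qed.

Lemma nrZ (r : R) (x : V) : nr (r%:C *: x) = `|r| * nr x.
Proof. by apply: complexI; rewrite -normE normrZ normCr normE mulC. Qed.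

Lemma nr0 : nr (0 : V) = 0.
Proof. by rewrite /nr normr0. Qed.

Lemma nr_le (x : V) (M : R) c : `|x| <= M%:C * c%:C -> nr x <= M * c.
Proof. by rewrite normE -mulC lecR. Qed.
End NR.

Set Implicit Arguments.
Unset Strict Implicit.

Section B.
Variable R : realType.
Variable U V : normedModType R[i].

Lemma near_right (f : R -> V) a : f @ at_right 0 --> a ->
  forall e : R, 0 < e -> exists2 d : R, 0 < d & forall k, 0 < k < d -> nr (f k - a) < e.
Proof.
move=> /cvgr_dist_lt H e e0.
have := H (e%:C); rewrite ltcR => /(_ e0).
rewrite near_withinE /= => /nbhs_ballP[d /= d0 Hd].
exists d => // k /andP[k0 kd].
have := Hd k; rewrite -ball_normE /= sub0r normrN ger0_norm ?ltW // => /(_ kd k0).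
by rewrite normE ltcR nrB.
Qed.

Lemma lin0 (f : U -> V) : linear_map f -> f 0 = 0.
Proof.
move=> lf; have h := lf 1 0 0; rewrite !scale1r addr0 in h.
by apply: (addrI (f 0)); rewrite addr0 -h.
Qed.
Lemma linN (f : U -> V) x : linear_map f -> f (- x) = - f x.
Proof. by move=> lf; have := lf (-1) x 0; rewrite addr0 lin0 // addr0 !scaleN1r. Qed.
Lemma linD (f : U -> V) x y : linear_map f -> f (x + y) = f x + f y.
Proof. by move=> lf; have := lf 1 x y; rewrite !scale1r. Qed.
Lemma linB (f : U -> V) x y : linear_map f -> f (x - y) = f x - f y.
Proof. by move=> lf; rewrite linD // linN. Qed.

Lemma linZ (f : U -> V) a x : linear_map f -> f (a *: x) = a *: f x.
Proof. by move=> lf; have := lf a x 0; rewrite !addr0 lin0 // addr0. Qed.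

Lemma bnd (f : U -> V) : bounded_op f -> exists M, 0 <= M /\ forall x, nr (f x) <= M * nr x.
Proof.
move=> [_ [M HM]]; exists (Num.max M 0); split; first by rewrite le_max lexx orbT.
move=> x; have := HM x; rewrite (normE x) => /nr_le h; apply: (le_trans h).
by rewrite ler_wpM2r ?nr_ge0 // le_max lexx.
Qed.
End B.
Section B2.
Variable R : realType.
Variable V : normedModType R[i].
Lemma tele (T : R -> V -> V) (M tau : R) (w a : V) :
 0 <= M ->
 (forall t, 0 <= t -> linear_map (T t)) ->
 (forall x, T 0 x = x) ->
 (forall t s x, 0 <= t -> 0 <= s -> T (t + s) x = T t (T s x)) ->
 (forall t x, 0 <= t <= tau -> nr (T t x) <= M * nr x) ->
 (fun k : R => (k^-1)%:C *: (T k w - w)) @ at_right 0 --> a ->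
 forall t, 0 <= t <= tau -> nr (T t w - w) <= M * t * nr a.
Proof.
move=> M0 lin T0 semi bd cv t /andP[t0 ttau].
case: (eqVneq t 0) => [->|tn0]; first by rewrite T0 subrr nr0 mulr0 mul0r.
have tp : 0 < t by rewrite lt_def tn0.
have ind : forall (k : R) (j : nat), 0 <= k -> j%:R * k <= tau ->
    nr (T (j%:R * k) w - w) <= j%:R * M * nr (T k w - w).
  move=> k j k0; elim: j => [|j IH] hj; first by rewrite !mul0r T0 subrr nr0.
  have jk0 : 0 <= j%:R * k by rewrite mulr_ge0.
  have jkt : j%:R * k <= tau.
    apply: le_trans hj; rewrite -natr1 mulrDl mul1r; lra.
  have e : j.+1%:R * k = j%:R * k + k by rewrite -natr1 mulrDl mul1r.
  rewrite e semi //.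
  have -> : T (j%:R * k) (T k w) - w = T (j%:R * k) (T k w - w) + (T (j%:R * k) w - w).
    by rewrite (linB _ _ (lin _ jk0)) addrA subrK.
  apply: le_trans (nrD _ _) _.
  have h1 : nr (T (j%:R * k) (T k w - w)) <= M * nr (T k w - w) by apply: bd; rewrite jk0 jkt.
  have h2 := IH jkt.
  apply: le_trans (lerD h1 h2) _.
  by rewrite -natr1 le_eqVlt; apply/orP; left; apply/eqP; ring.
apply/ler_addgt0Pr => e e0.
set eps := e / (M * t + 1).
have Mt0 : 0 <= M * t by rewrite mulr_ge0 // ltW.
have eps0 : 0 < eps by rewrite divr_gt0 // ltr_wpDl.
have [d d0 Hd] := near_right cv eps0.
set n := (Num.truncn (t / d)).
have hn := truncnS_gt (t / d).
have n0 : 0 < n.+1%:R :> R by rewrite ltr0n.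
set k := t / n.+1%:R.
have k0 : 0 < k by rewrite divr_gt0.
have kd : k < d.
  by rewrite /k ltr_pdivrMr // mulrC -ltr_pdivrMr.
have hk : n.+1%:R * k = t by rewrite /k mulrC divfK // gt_eqF.
have := ind k n.+1 (ltW k0); rewrite hk => /(_ ttau) h.
apply: le_trans h _.
have h3 := Hd k; rewrite k0 kd in h3; specialize (h3 isT).
have h4 : nr ((k^-1)%:C *: (T k w - w)) <= nr a + eps.
  have := nrD ((k^-1)%:C *: (T k w - w) - a) a; rewrite subrK => h5.
  by apply: le_trans h5 _; rewrite addrC lerD2l; apply: ltW.
rewrite nrZ ger0_norm in h4; last by rewrite invr_ge0 ltW.
have h6 : nr (T k w - w) <= k * (nr a + eps).
  by rewrite -ler_pdivrMl.
have : n.+1%:R * M * nr (T k w - w) <= n.+1%:R * M * (k * (nr a + eps)).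
  by rewrite ler_wpM2l // mulr_ge0 // ltW.
move/le_trans; apply.
have -> : n.+1%:R * M * (k * (nr a + eps)) = M * t * nr a + M * t * eps.
  by rewrite -hk; ring.
rewrite lerD2l /eps mulrA ler_pdivrMr ?ltr_wpDl //; nra.
Qed.
End B2.

Set Implicit Arguments.
Unset Strict Implicit.

Section Seq.
Variable R : realType.
Variable V : normedModType R[i].

Lemma seq_lim_dist (u : nat -> V) l : u @ \oo --> l ->
  forall e : R, 0 < e -> exists N, forall n, (N <= n)%N -> nr (u n - l) < e.
Proof.
move=> /cvgr_dist_lt H e e0.
have := H (e%:C); rewrite ltcR => /(_ e0) [N _ HN].
exists N => n Nn; have := HN n Nn; rewrite /= normE ltcR nrB //.
Qed.

Lemma lim_le (u : nat -> V) l c (B : R) N : u @ \oo --> l ->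
  (forall n, (N <= n)%N -> nr (u n - c) <= B) -> nr (l - c) <= B.
Proof.
move=> cv Hb; apply/ler_addgt0Pr => e e0.
have [M HM] := seq_lim_dist cv e0.
have h1 := HM (maxn N M) (leq_maxr _ _).
have h2 := Hb (maxn N M) (leq_maxl _ _).
have := nrD (l - u (maxn N M)) (u (maxn N M) - c).
rewrite addrA subrK => h; apply: le_trans h _.
rewrite (nrB l) addrC; apply: lerD; [exact: h2 | exact: ltW].
Qed.
End Seq.

Section Cpl.
Variable R : realType.
Variable V : completeNormedModType R[i].

Lemma seq_cauchy (u : nat -> V) :
  (forall e : R, 0 < e -> exists N, forall m n, (N <= m)%N -> (N <= n)%N -> nr (u m - u n) < e) ->
  u @ \oo --> lim (u @ \oo).
Proof.
move=> H; apply: cauchy_cvg; apply: cauchy_exP => eps eps0.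
have := realC_norm (ltW eps0) => epsE.
have e0 : 0 < complex.Re eps by rewrite -ltcR -epsE.
have [N HN] := H _ e0.
exists (u N); exists N => // n /= Nn.
rewrite -ball_normE /= normE epsE ltcR; exact: HN.
Qed.
End Cpl.

Set Implicit Arguments.
Unset Strict Implicit.

Section UBP.
Variable R : realType.
Variable F : completeNormedModType R[i].

Definition opn (T : F -> F) : R := sup [set r | exists u, nr u <= 1 /\ r = nr (T u)].

Lemma nr_eq0 (x : F) : nr x = 0 -> x = 0.
Proof. by move=> h; apply/eqP; rewrite -normr_eq0 normE h. Qed.

Lemma opn_prop T : bounded_op T -> [/\ 0 <= opn T,
  (forall x, nr (T x) <= opn T * nr x) &
  (forall e, 0 < e -> exists u, nr u <= 1 /\ opn T - e < nr (T u))].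
Proof.
move=> bT; have [M [M0 HM]] := bnd bT; case: bT => lin _.
set A := [set r | exists u, nr u <= 1 /\ r = nr (T u)].
have hs : has_sup A.
  split; first by exists 0; exists 0; rewrite nr0 ler01 lin0 // nr0.
  exists M => r [u [u1 ->]]; apply: le_trans (HM u) _.
  by rewrite -[leRHS]mulr1 ler_wpM2l.
have ub := sup_upper_bound hs.
have o0 : 0 <= opn T by apply: ub; exists 0; rewrite nr0 ler01 lin0 // nr0.
split => //.
- move=> x; have [nx0|nxp] := eqVneq (nr x) 0.
    by rewrite (nr_eq0 nx0) lin0 // !nr0 mulr0.
  have nxg : 0 < nr x by rewrite lt_def nxp nr_ge0.
  have hu : nr (((nr x)^-1)%:C *: x) <= 1.
    by rewrite nrZ ger0_norm ?invr_ge0 ?nr_ge0 // mulVf.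
  have := ub _ (ex_intro _ _ (conj hu erefl)).
  rewrite linZ // nrZ ger0_norm ?invr_ge0 ?nr_ge0 // => h.
  by rewrite mulrC -ler_pdivrMl // mulrC.
- move=> e e0; have [r [u [u1 ->]] hr] := sup_adherent e0 hs.
  by exists u.
Qed.

Lemma pow3_ge (k : nat) : k.+1%:R <= 3 ^+ k :> R.
Proof.
elim: k => [|k IH]; first by rewrite expr0.
have h : (1 <= k.+1%:R :> R) by rewrite ler1n.
rewrite exprS -natr1; lra.
Qed.

Lemma sokal (T : F -> F) y z : linear_map T ->
  nr (T z) <= Num.max (nr (T (y + z))) (nr (T (y - z))).
Proof.
move=> lin.
have e : T z + T z = T (y + z) - T (y - z).
  rewrite -linB // -linD //.
  by congr T; rewrite opprB [RHS]addrC addrA subrK.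
have := nrD (T (y + z)) (- T (y - z)); rewrite -e nrN.
have -> : T z + T z = 2%:C *: T z by rewrite -[2]/(1 + 1 : R) rmorphD rmorph1 scalerDl scale1r.
rewrite nrZ ger0_norm // => h.
have h1 : nr (T (y + z)) <= Num.max (nr (T (y + z))) (nr (T (y - z))) by rewrite le_max lexx.
have h2 : nr (T (y - z)) <= Num.max (nr (T (y + z))) (nr (T (y - z))) by rewrite le_max lexx orbT.
lra.
Qed.

Lemma local_bound (S : R -> F -> F) :
 (forall t, 0 <= t -> bounded_op (S t)) -> (forall x, S 0 x = x) ->
 (forall x, (fun t => S t x) @ at_right 0 --> x) ->
 exists d M : R, [/\ 0 < d, 0 <= M & forall t x, 0 <= t <= d -> nr (S t x) <= M * nr x].
Proof.
move=> bS S0 cS.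
apply: contrapT => H.
pose c (k : nat) : R := 6 * 3 ^+ k * k.+1%:R.
have step : forall k : nat, exists tu : R * F,
   [/\ 0 <= tu.1 <= (k.+1%:R)^-1, c k < opn (S tu.1), nr tu.2 <= 1
     & 2 / 3 * opn (S tu.1) < nr (S tu.1 tu.2)].
  move=> k.
  have : ~ (forall t x, 0 <= t <= (k.+1%:R)^-1 -> nr (S t x) <= c k * nr x).
    move=> h; apply: H; exists (k.+1%:R)^-1, (c k); split => //.
    by rewrite /c !mulr_ge0 // exprn_ge0.
  move/existsNP => [t /existsNP [x /not_implyP [ht hx]]].
  move/negP: hx; rewrite -ltNge => hx.
  have t0 : 0 <= t by case/andP: ht.
  have [hO0 ob oa] := opn_prop (bS t t0).
  have hlt : c k < opn (S t).
    have := ob x => h1.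
    have nx0 := nr_ge0 x.
    have ck0 : 0 <= c k by rewrite /c !mulr_ge0 // exprn_ge0.
    rewrite ltNge; apply/negP => hle.
    have : opn (S t) * nr x <= c k * nr x by rewrite ler_wpM2r.
    lra.
  have o3 : 0 < opn (S t) / 3.
    by rewrite divr_gt0 // (le_lt_trans _ hlt) // /c !mulr_ge0 // exprn_ge0.
  have [u [u1 hu]] := oa _ o3.
  exists (t, u); split => //=; lra.
have [f Hf] := choice step.
pose t k := (f k).1.
pose u k := (f k).2.
pose q : R := 3^-1.
have q0 : 0 < q by rewrite invr_gt0.
have q1 : q < 1 by rewrite invf_lt1 // ltr1n.
pose xs := fix xs (k : nat) : F := match k with
  | 0 => 0
  | k'.+1 => let y := xs k' in let z := (q ^+ k')%:C *: u k' in
      if nr (S (t k') (y - z)) <= nr (S (t k') (y + z)) then y + z else y - z end.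
have lin : forall k, linear_map (S (t k)).
  by move=> k; case: (bS (t k)) => //; case: (Hf k) => /andP[].
have xsS : forall k, xs k.+1 = if nr (S (t k) (xs k - (q ^+ k)%:C *: u k)) <=
     nr (S (t k) (xs k + (q ^+ k)%:C *: u k)) then xs k + (q ^+ k)%:C *: u k
     else xs k - (q ^+ k)%:C *: u k by [].
have P1 : forall k, nr (xs k.+1 - xs k) <= q ^+ k.
  move=> k; rewrite xsS; set y := xs k; set z := (q ^+ k)%:C *: u k.
  have hz : nr z <= q ^+ k.
    rewrite /z nrZ ger0_norm; last by rewrite exprn_ge0 // ltW.
    have u1 : nr (u k) <= 1 by case: (Hf k).
    by rewrite -[X in _ <= X]mulr1 ler_wpM2l // exprn_ge0 // ltW.
  case: ifP => _.
    by rewrite addrAC subrr add0r.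
  by rewrite addrAC subrr add0r nrN.
have P2 : forall k, q ^+ k * nr (S (t k) (u k)) <= nr (S (t k) (xs k.+1)).
  move=> k; rewrite xsS; set y := xs k; set z := (q ^+ k)%:C *: u k.
  have hs := sokal y z (lin k).
  have -> : q ^+ k * nr (S (t k) (u k)) = nr (S (t k) z).
    by rewrite /z linZ // nrZ ger0_norm // exprn_ge0 // ltW.
  case: ifP => hc; apply: le_trans hs _; rewrite ge_max ?lexx ?hc //=.
  by rewrite andbT ltW // ltNge hc.
have P3 : forall n j, nr (xs (n + j)%N - xs n) <= 3 / 2 * q ^+ n * (1 - q ^+ j).
  move=> n; elim => [|j IH]; first by rewrite addn0 subrr nr0 expr0 subrr mulr0.
  rewrite addnS.
  have := nrD (xs (n + j).+1 - xs (n + j)) (xs (n + j) - xs n).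
  rewrite addrA subrK => h; apply: le_trans h _.
  have := P1 (n + j)%N; rewrite exprD => h1.
  have e : 3 / 2 * q ^+ n * (1 - q ^+ j.+1) = q ^+ n * q ^+ j + 3 / 2 * q ^+ n * (1 - q ^+ j).
    by rewrite exprS /q; field.
  by rewrite e lerD.
have tailb : forall n m, (n <= m)%N -> nr (xs m - xs n) <= 3 / 2 * q ^+ n.
  move=> n m nm; have := P3 n (m - n)%N; rewrite subnKC // => h.
  have hq : 0 <= q ^+ (m - n) by rewrite exprn_ge0 // ltW.
  have hq2 : 0 <= 3 / 2 * q ^+ n by rewrite mulr_ge0 // exprn_ge0 // ltW.
  apply: le_trans h _; rewrite -[X in _ <= X]mulr1; apply: ler_wpM2l => //; lra.
have qN : forall N : nat, 3 * q ^+ N <= 3 / N.+1%:R.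
  move=> N; rewrite /q exprVn; have := pow3_ge N => h.
  rewrite ler_pM2l // lef_pV2 ?posrE ?exprn_gt0 ?ltr0n //.
have hcau : forall e : R, 0 < e -> exists N, forall m n, (N <= m)%N -> (N <= n)%N ->
    nr (xs m - xs n) < e.
  move=> e e0; exists (Num.truncn (3 / e)) => m n hm hn.
  set N := Num.truncn (3 / e) in hm hn *.
  have h1 := tailb _ _ hm; have h2 := tailb _ _ hn.
  have -> : xs m - xs n = (xs m - xs N) - (xs n - xs N) by rewrite opprB addrA subrK.
  have := nrD (xs m - xs N) (-(xs n - xs N)); rewrite nrN => h3.
  have h4 := qN N; have h5 := truncnS_gt (3 / e).
  have h6 : 3 / N.+1%:R < e.
    rewrite ltr_pdivrMr ?ltr0n // mulrC -ltr_pdivrMr //.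
  apply: le_lt_trans h3 _; apply: le_lt_trans (lerD h1 h2) _.
  move: h4 h6; set a := q ^+ N; set b := 3 / N.+1%:R; lra.
have cx := seq_cauchy hcau.
set x := lim (xs @ \oo) in cx.
have P4 : forall n, nr (x - xs n) <= 3 / 2 * q ^+ n.
  by move=> n; apply: (lim_le (N:=n) cx) => m nm; exact: tailb.
have P5 : forall k, k.+1%:R < nr (S (t k) x).
  move=> k; have [/andP[tk0 _] hc u1 hu] := Hf k.
  have [hO0 ob oa] := opn_prop (bS _ tk0).
  rewrite -/(t k) -/(u k) in hc hu hO0 ob oa.
  set Nk := opn (S (t k)) in hc hu hO0 ob oa.
  have e1 := P2 k.
  have e2 := ob (x - xs k.+1).
  have e3 := P4 k.+1.
  have e4 : S (t k) (xs k.+1) = S (t k) x - S (t k) (x - xs k.+1).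
    by rewrite linB // opprB addrC subrK.
  have e5 := nrD (S (t k) x) (- S (t k) (x - xs k.+1)); rewrite nrN -e4 in e5.
  set Q := q ^+ k.
  have Q0 : 0 < Q by rewrite exprn_gt0.
  have {}e1 : Q * nr (S (t k) (u k)) <= nr (S (t k) (xs k.+1)) := e1.
  have eQ : q ^+ k.+1 = Q / 3 by rewrite exprSr /q.
  rewrite eQ in e3.
  have a1 : c k * Q < Nk * Q by rewrite ltr_pM2r.
  have a2 : 2 / 3 * Nk * Q <= nr (S (t k) (u k)) * Q by rewrite ler_pM2r // ltW.
  have a3 : Nk * nr (x - xs k.+1) <= Nk * (3 / 2 * (Q / 3)) by rewrite ler_wpM2l.
  have a4 : c k * Q = 6 * k.+1%:R.
    rewrite /c /Q /q exprVn; field; by rewrite expf_neq0.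
  have a5 : nr (S (t k) (u k)) * Q = Q * nr (S (t k) (u k)) by rewrite mulrC.
  have a6 : Nk * (3 / 2 * (Q / 3)) = (Nk * Q) / 2 by field.
  have a7 : 2 / 3 * Nk * Q = 2 / 3 * (Nk * Q) by rewrite mulrA.
  move: e1 e2 e5 a1 a2 a3 a4 a5 a6 a7.
  move: (nr (S (t k) x)) (nr (S (t k) (u k))) (nr (S (t k) (xs k.+1))).
  move: (nr (S (t k) (x - xs k.+1))) (nr (x - xs k.+1)) (c k).
  clearbody Q Nk; move=> ? ? ? ? ? ? *; lra.
have [d d0 Hd] := near_right (cS x) ltr01.
set k := Num.truncn (d^-1 + nr x + 1).
have hk := truncnS_gt (d^-1 + nr x + 1); rewrite -/k in hk.
have h5 := P5 k.
have [/andP [tk0 tk] _ _ _] := Hf k.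
rewrite -/(t k) in tk0 tk.
have dinv : 0 < d^-1 by rewrite invr_gt0.
have nx0 := nr_ge0 x.
case: (eqVneq (t k) 0) => [e|ne].
  rewrite e S0 in h5; lra.
have tkp : 0 < t k by rewrite lt_def ne.
have tkd : t k < d.
  apply: le_lt_trans tk _.
  have kp : 0 < k.+1%:R :> R by rewrite ltr0n.
  rewrite -div1r ltr_pdivrMr // -ltr_pdivrMl //; lra.
have h6 := Hd (t k); rewrite tkp tkd in h6; specialize (h6 isT).
have := nrD (S (t k) x - x) x; rewrite subrK => h7.
lra.
Qed.
End UBP.

Set Implicit Arguments.
Unset Strict Implicit.

Lemma sum_prod (V : nmodType) (F : nat -> V) N M :
  \sum_(0 <= l < N * M) F l = \sum_(0 <= i < N) \sum_(0 <= j < M) F (i * M + j)%N.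
Proof.
elim: N => [|N IH]; first by rewrite mul0n !big_geq.
rewrite big_nat_recr //= -IH mulSn addnC (@big_cat_nat _ _ _ (N * M)) ?leq_addr //=.
congr (_ + _); rewrite -{1}[(N * M)%N]add0n big_addn addKn.
apply: eq_bigr => i _; by rewrite addnC.
Qed.

Section Riem.
Variable R : realType.
Variable V : completeNormedModType R[i].

Lemma nr_sum (I : Type) (r : seq I) (P : pred I) (F : I -> V) (G : I -> R) :
  (forall i, P i -> nr (F i) <= G i) -> nr (\sum_(i <- r | P i) F i) <= \sum_(i <- r | P i) G i.
Proof.
move=> h; apply: (big_ind2 (fun x y => nr x <= y)) => //; first by rewrite nr0.
by move=> x1 x2 y1 y2 h1 h2; apply: le_trans (nrD _ _) (lerD h1 h2).
Qed.

Definition rs (g : R -> V) (h : R) (N : nat) : V :=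
  \sum_(i < N) (h / N%:R)%:C *: g (h * i%:R / N%:R).

Lemma rs_riemann g h n : riemann_sum g 0 h n = rs g h n.+1.
Proof. by rewrite /riemann_sum /rs subr0; apply: eq_bigr => i _; rewrite add0r. Qed.

Lemma pt_in (h : R) (i N : nat) : 0 <= h -> (i <= N)%N -> (0 < N)%N -> 0 <= h * i%:R / N%:R <= h.
Proof.
move=> h0 iN N0; have Np : 0 < N%:R :> R by rewrite ltr0n.
apply/andP; split; first by rewrite divr_ge0 ?ler0n // mulr_ge0 // ler0n.
by rewrite ler_pdivrMr // ler_wpM2l // ler_nat.
Qed.

Lemma sumC (h : R) (N : nat) (x : V) : (0 < N)%N ->
  \sum_(i < N) (h / N%:R)%:C *: x = h%:C *: x.
Proof.
move=> N0; rewrite sumr_const card_ord scalerMnl -rmorphMn -mulr_natr divfK //.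
by rewrite pnatr_eq0 -lt0n.
Qed.

Lemma rs_bound g h c rho N : 0 <= h -> (0 < N)%N ->
  (forall s, 0 <= s <= h -> nr (g s - c) <= rho) -> nr (rs g h N - h%:C *: c) <= h * rho.
Proof.
move=> h0 N0 hb; have Np : 0 < N%:R :> R by rewrite ltr0n.
rewrite -(sumC h c N0) /rs -sumrB.
have H1 : nr (\sum_(i < N) ((h / N%:R)%:C *: g (h * i%:R / N%:R) - (h / N%:R)%:C *: c))
   <= \sum_(i < N) (h / N%:R * rho).
  apply: nr_sum => i _; rewrite -scalerBr nrZ ger0_norm ?divr_ge0 ?ler0n //.
  rewrite ler_wpM2l ?divr_ge0 ?ler0n //; apply: hb; apply: pt_in => //; exact: ltnW.
apply: le_trans H1 _.
rewrite sumr_const card_ord.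
have -> : h / N%:R * rho *+ N = h / N%:R * rho * N%:R by rewrite mulr_natr.
rewrite le_eqVlt; apply/orP; left; apply/eqP; field.
by rewrite pnatr_eq0 -lt0n.
Qed.

Lemma nr_sum_nat m n (F : nat -> V) (G : nat -> R) :
  (forall i, (m <= i < n)%N -> nr (F i) <= G i) ->
  nr (\sum_(m <= i < n) F i) <= \sum_(m <= i < n) G i.
Proof.
move=> h; rewrite big_seq [X in _ <= X]big_seq; apply: nr_sum => i.
by rewrite mem_index_iota; exact: h.
Qed.

Lemma rs_refine g h K N M : 0 <= h -> 0 <= K -> (0 < N)%N -> (0 < M)%N ->
  (forall s s', 0 <= s <= h -> 0 <= s' <= h -> nr (g s - g s') <= K * `|s - s'|) ->
  nr (rs g h N - rs g h (N * M)) <= K * h ^+ 2 / N%:R.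
Proof.
move=> h0 K0 N0 M0 Lip.
have Np : 0 < N%:R :> R by rewrite ltr0n.
have Mp : 0 < M%:R :> R by rewrite ltr0n.
have Nn : N%:R != 0 :> R by rewrite gt_eqF.
have Mn : M%:R != 0 :> R by rewrite gt_eqF.
set a := h / (N * M)%N%:R.
have a0 : 0 <= a by rewrite /a divr_ge0 ?ler0n.
have e1 : rs g h (N * M) = \sum_(0 <= i < N) \sum_(0 <= j < M)
    a%:C *: g (h * (i * M + j)%N%:R / (N * M)%N%:R).
  by rewrite /rs -(big_mkord xpredT (fun l => a%:C *: g (h * l%:R / (N * M)%N%:R))) sum_prod.
have e2 : rs g h N = \sum_(0 <= i < N) \sum_(0 <= j < M) a%:C *: g (h * i%:R / N%:R).
  rewrite /rs -(big_mkord xpredT (fun i => (h / N%:R)%:C *: g (h * i%:R / N%:R))).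
  apply: eq_bigr => i _; rewrite sumr_const_nat subn0 scalerMnl -rmorphMn.
  congr (_%:C *: _); rewrite -mulr_natr /a natrM; field.
  by rewrite Nn Mn.
rewrite e1 e2 -sumrB.
have H1 : nr (\sum_(0 <= i < N) (\sum_(0 <= j < M) a%:C *: g (h * i%:R / N%:R) -
     \sum_(0 <= j < M) a%:C *: g (h * (i * M + j)%N%:R / (N * M)%N%:R)))
   <= \sum_(0 <= i < N) \sum_(0 <= j < M) (a * (K * (h / N%:R))).
  apply: nr_sum_nat => i /andP[_ iN]; rewrite -sumrB; apply: nr_sum_nat => j /andP[_ jM].
  rewrite -scalerBr nrZ ger0_norm //; apply: ler_wpM2l => //.
  have ijNM : (i * M + j <= N * M)%N by nia.
  have NM0 : (0 < N * M)%N by rewrite muln_gt0 N0 M0.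
  have L1 := Lip _ _ (@pt_in h i N h0 (ltnW iN) N0) (@pt_in h _ _ h0 ijNM NM0).
  apply: le_trans L1 _.
  apply: ler_wpM2l => //.
  have -> : h * i%:R / N%:R - h * (i * M + j)%N%:R / (N * M)%N%:R = - (h * j%:R / (N * M)%N%:R).
    by rewrite natrD !natrM; field; rewrite Nn Mn.
  rewrite normrN ger0_norm ?divr_ge0 ?mulr_ge0 ?ler0n //.
  rewrite ler_pdivrMr ?natrM ?mulr_gt0 //.
  have -> : h / N%:R * (N%:R * M%:R) = h * M%:R by field.
  by rewrite ler_wpM2l // ler_nat ltnW.
apply: le_trans H1 _.
rewrite sumr_const_nat subn0 sumr_const_nat subn0.
have -> : a * (K * (h / N%:R)) *+ M *+ N = a * (K * (h / N%:R)) * M%:R * N%:R by rewrite !mulr_natr.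
rewrite le_eqVlt; apply/orP; left; apply/eqP; rewrite /a natrM; field.
by rewrite Nn Mn.
Qed.

Lemma vint_bound (g : R -> V) (h K : R) (c : V) (rho : R) : 0 <= h -> 0 <= K ->
  (forall s s', 0 <= s <= h -> 0 <= s' <= h -> nr (g s - g s') <= K * `|s - s'|) ->
  (forall s, 0 <= s <= h -> nr (g s - c) <= rho) ->
  nr (vintegral g 0 h - h%:C *: c) <= h * rho.
Proof.
move=> h0 K0 Lip hb.
have cv : riemann_sum g 0 h @ \oo --> lim (riemann_sum g 0 h @ \oo).
  apply: seq_cauchy => e e0.
  set B := K * h ^+ 2.
  have B0 : 0 <= B by rewrite mulr_ge0 // exprn_ge0.
  exists (Num.truncn (2 * B / e)) => m n hm hn.
  set N := Num.truncn (2 * B / e) in hm hn.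
  rewrite !rs_riemann.
  have r1 := rs_refine (N:=m.+1) (M:=n.+1) h0 K0 isT isT Lip.
  have r2 := rs_refine (N:=n.+1) (M:=m.+1) h0 K0 isT isT Lip.
  rewrite mulnC in r2.
  set P := rs g h (m.+1 * n.+1) in r1 r2.
  have -> : rs g h m.+1 - rs g h n.+1 = (rs g h m.+1 - P) - (rs g h n.+1 - P)
    by rewrite opprB addrA subrK.
  have := nrD (rs g h m.+1 - P) (- (rs g h n.+1 - P)); rewrite nrN => r3.
  have hN := truncnS_gt (2 * B / e); rewrite -/N in hN.
  have hm' : B / m.+1%:R <= B / N.+1%:R.
    by apply: ler_wpM2l => //; rewrite lef_pV2 ?posrE ?ltr0n // ler_nat.
  have hn' : B / n.+1%:R <= B / N.+1%:R.
    by apply: ler_wpM2l => //; rewrite lef_pV2 ?posrE ?ltr0n // ler_nat.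
  have hB : B / N.+1%:R < e / 2.
    have hN2 : 2 * B < N.+1%:R * e by rewrite -ltr_pdivrMr.
    rewrite ltr_pdivrMr ?ltr0n //; lra.
  move: r1 r2 r3 hm' hn' hB; rewrite -/B.
  set x1 := nr _; set x2 := nr _; set x3 := nr _.
  set y1 := B / _; set y2 := B / _; set y3 := B / _. lra.
rewrite /vintegral; apply: (lim_le (N:=0) cv) => n _; rewrite rs_riemann.
exact: rs_bound.
Qed.
End Riem.

Set Implicit Arguments.
Unset Strict Implicit.

Section Glob.
Variable R : realType.
Variable V : normedModType R[i].

Lemma lipT (T : R -> V -> V) (M tau : R) (w a : V) :
 0 <= M ->
 (forall t, 0 <= t -> linear_map (T t)) ->
 (forall x, T 0 x = x) ->
 (forall t s x, 0 <= t -> 0 <= s -> T (t + s) x = T t (T s x)) ->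
 (forall t x, 0 <= t <= tau -> nr (T t x) <= M * nr x) ->
 (fun k : R => (k^-1)%:C *: (T k w - w)) @ at_right 0 --> a ->
 forall t t', 0 <= t <= tau -> 0 <= t' <= tau ->
   nr (T t w - T t' w) <= M * M * `|t - t'| * nr a.
Proof.
move=> M0 lin T0 semi bd cv.
have key : forall t t', 0 <= t <= tau -> 0 <= t' <= tau -> t' <= t ->
   nr (T t w - T t' w) <= M * M * `|t - t'| * nr a.
  move=> t t' ht ht' tt.
  have /andP[t0 ttau] := ht; have /andP[t'0 t'tau] := ht'.
  have d0 : 0 <= t - t' by rewrite subr_ge0.
  have -> : T t w - T t' w = T t' (T (t - t') w - w).
    by rewrite (linB _ _ (lin _ t'0)) -semi // [t' + _]addrC subrK.
  apply: le_trans (bd _ _ ht') _.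
  have hd : 0 <= t - t' <= tau by rewrite d0 /=; lra.
  have := tele M0 lin T0 semi bd cv hd => h1.
  rewrite ger0_norm // -!mulrA; apply: ler_wpM2l => //; rewrite mulrA //.
move=> t t' ht ht'; case: (boolP (t' <= t)) => tt; first exact: key.
rewrite -ltNge in tt.
rewrite (nrB (T t w)) (distrC t); exact: key ht' ht (ltW tt).
Qed.
End Glob.

Section Glob2.
Variable R : realType.
Variable F : completeNormedModType R[i].

Lemma bound_on (S : R -> F -> F) :
 (forall t, 0 <= t -> bounded_op (S t)) -> (forall x, S 0 x = x) ->
 (forall x, (fun t => S t x) @ at_right 0 --> x) ->
 (forall t s x, 0 <= t -> 0 <= s -> S (t + s) x = S t (S s x)) ->
 forall tau, exists M : R, 1 <= M /\ forall t x, 0 <= t <= tau -> nr (S t x) <= M * nr x.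
Proof.
move=> bS S0 cS semi tau.
have [d [M0 [d0 M00 HM]]] := local_bound bS S0 cS.
set M := Num.max M0 1.
have M1 : 1 <= M by rewrite le_max lexx orbT.
have MM0 : M0 <= M by rewrite le_max lexx.
have P : forall n : nat, forall t x, 0 <= t <= n%:R * d -> nr (S t x) <= M ^+ n * nr x.
  elim => [|n IH] t x.
    rewrite mul0r => ht; have -> : t = 0 by apply/eqP; rewrite eq_le andbC.
    by rewrite S0 expr0 mul1r.
  move=> /andP[t0 tn].
  have Mn1 : 1 <= M ^+ n by rewrite exprn_ege1.
  have nx0 := nr_ge0 x.
  case: (lerP t d) => td.
    apply: le_trans (HM _ _ _) _; first by rewrite t0 td.
    rewrite exprS; apply: ler_wpM2r => //.
    apply: le_trans MM0 _; rewrite -[X in X <= _]mulr1; apply: ler_wpM2l => //; lra.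
  have -> : t = d + (t - d) by rewrite addrC subrK.
  have d0' : 0 <= d by exact: ltW.
  have td' : 0 <= t - d by rewrite subr_ge0 ltW.
  rewrite semi //.
  apply: le_trans (HM _ _ _) _; first by rewrite d0' lexx.
  have h1 : 0 <= t - d <= n%:R * d.
    rewrite subr_ge0 ltW //=; move: tn; rewrite -natr1 mulrDl mul1r; lra.
  have := IH _ x h1 => h2.
  apply: le_trans (ler_wpM2l M00 h2) _.
  rewrite exprS mulrA; apply: ler_wpM2r => //; apply: ler_wpM2r; last by [].
  exact: le_trans (exprn_ge0 _ (le_trans ler01 M1)) _ ; done.
set n := (Num.truncn (tau / d)).+1.
exists (M ^+ n); split; first by rewrite exprn_ege1.
move=> t x /andP[t0 tt]; apply: P; rewrite t0 /=.
have := truncnS_gt (tau / d); rewrite -/n => hn.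
rewrite ltr_pdivrMr // in hn; apply: ltW; apply: le_lt_trans tt hn.
Qed.
End Glob2.

Set Implicit Arguments.
Unset Strict Implicit.

Section TB.
Variable R : realType.
Variable E : completeNormedModType R[i].
Lemma T0_bound (T0 : R -> E -> E) : bounded_analytic T0 -> (forall x, T0 0 x = x) ->
  exists M : R, 1 <= M /\ forall t x, 0 <= t -> nr (T0 t x) <= M * nr x.
Proof.
case=> d [/andP[d0 _] [Tc [[hTc _ _ _ _] hb]]] T00.
have d2 : 0 < d / 2 < d by rewrite divr_gt0 //= ltr_pdivrMr //; lra.
have [M HM] := hb _ d2.
exists (Num.max M 1); split; first by rewrite le_max lexx orbT.
move=> t x t0; have nx0 := nr_ge0 x.
case: (eqVneq t 0) => [->|tn].
  rewrite T00 -[X in X <= _]mul1r; apply: ler_wpM2r => //; by rewrite le_max lexx orbT.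
have tp : 0 < t by rewrite lt_def tn.
have sec : sector (d / 2) (t%:C : R[i]^o).
  exists t, 0; split => //; first by rewrite normr0; case/andP: d2.
  by rewrite cos0 sin0 mulr1 mulr0.
have := HM _ x sec; rewrite hTc // (normE x) => /nr_le h.
apply: le_trans h _; apply: ler_wpM2r => //; by rewrite le_max lexx.
Qed.
End TB.

Unset Implicit Arguments.
Theorem lemma4p4 (R : realType) (E F : completeNormedModType R[i])
  (domAm : set E) (Am : E -> E) (L : E -> F)
  (domB : set F) (B : F -> F)
  (T0 : R -> E -> E) (S : R -> F -> F)
  (D0 : F -> E) (A0inv : E -> E) :
  (* A_m, L, B linear operators; L surjective, graph-norm bounded *)
  lin_subspace domAm -> linear_on domAm Am -> linear_on domAm L ->
  (forall y, exists x, domAm x /\ L x = y) ->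
  (exists M : R, forall x, domAm x -> `|L x| <= M%:C * (`|x| + `|Am x|)) ->
  lin_subspace domB -> linear_on domB B ->
  (* A_0 := A_m restricted to ker L generates a bounded analytic semigroup T_0 *)
  generates (domAm `&` [set x | L x = 0]) Am T0 ->
  bounded_analytic T0 ->
  (* B generates the C_0-semigroup S *)
  generates domB B S ->
  (* x |-> (A_m x, L x) is closed *)
  closed [set p : E * (E * F) | exists x, domAm x /\ p = (x, (Am x, L x))] ->
  (* A_0 boundedly invertible, with inverse A0inv *)
  bounded_op A0inv ->
  (forall x, [/\ domAm (A0inv x), L (A0inv x) = 0 & Am (A0inv x) = x]) ->
  (forall x, domAm x -> L x = 0 -> A0inv (Am x) = x) ->
  (* B boundedly invertible *)
  (exists Binv : F -> F, [/\ bounded_op Binv,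
       (forall y, domB (Binv y) /\ B (Binv y) = y) &
       (forall y, domB y -> Binv (B y) = y)]) ->
  (* D_0 = (L restricted to ker A_m)^{-1}, a bounded operator F -> E *)
  (forall y, [/\ domAm (D0 y), Am (D0 y) = 0 & L (D0 y) = y]) ->
  bounded_op D0 ->
  (* Q(t) extends to bounded operators with limsup_{t -> 0+} ||Q(t)|| < oo *)
  (exists Q : R -> F -> E,
     [/\ (forall t, 0 <= t -> bounded_op (Q t)),
         (forall t y, 0 <= t -> domB y ->
            Q t y = D0 (S t y) - T0 t (D0 y)
                    - vintegral (fun s : R => T0 (t - s) (D0 (S s (B y)))) 0 t) &
         (exists (M d : R), 0 < d /\
            forall t y, 0 < t < d -> `|Q t y| <= M%:C * `|y|)]) ->
  forall tmax : R, 0 < tmax ->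
  exists C : R, 0 <= C /\
  forall (h s0 s1 : R) (y : F),
    0 <= h <= tmax -> 0 <= s0 <= h -> 0 <= s1 <= h ->
    domB y -> domB (B y) ->
    `| vintegral (fun s : R => T0 (h - s) (A0inv (D0 (S s (B y))))) 0 h
       - h%:C *: T0 (h - s0) (A0inv (D0 (S s1 (B y)))) |
    <= (C * h ^+ 2)%:C * (`|B y| + `|B (B y)|).
Proof.
move=> lsAm linAm linL Lsurj Lbd lsB linBB genT baT genS' clos bA0 A0P A0K _ D0P bD0 _ tmax tmax0.
case: genT => [[bT T00 semiT cT] genT].
case: genS' => [[bS S00 semiS cS] genS].
have [MT [MT1 HMT]] := T0_bound baT T00.
have [MA [MA0 HMA]] := bnd bA0.
have [MD [MD0 HMD]] := bnd bD0.
have [MS [MS1 HMS]] := bound_on bS S00 cS semiS tmax.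
have MT0 : 0 <= MT by apply: le_trans MT1; exact: ler01.
have MS0 : 0 <= MS by apply: le_trans MS1; exact: ler01.
have linT : forall t, 0 <= t -> linear_map (T0 t) by move=> t ht; case: (bT t ht).
have linS : forall t, 0 <= t -> linear_map (S t) by move=> t ht; case: (bS t ht).
have linA : linear_map A0inv by case: bA0.
have linD : linear_map D0 by case: bD0.
pose C := MT * MT * MD * MS + MT * MA * MD * MS * MS.
have C1 : 0 <= MT * MT * MD * MS by rewrite !mulr_ge0.
have C2 : 0 <= MT * MA * MD * MS * MS by rewrite !mulr_ge0.
exists C; split; first by rewrite addr_ge0.
move=> h s0 s1 y /andP[h0 htm] hs0 hs1 dy dBy.
set v := B y.
have dS : (fun k : R => (k^-1)%:C *: (S k v - v)) @ at_right 0 --> B v := (genS v).2 dBy.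
have HMT' : forall t x, 0 <= t <= tmax -> nr (T0 t x) <= MT * nr x.
  by move=> t x /andP[t0 _]; exact: HMT.
have lipS := lipT MS0 linS S00 semiS HMS dS.
have lipTz : forall z t t', 0 <= t <= tmax -> 0 <= t' <= tmax ->
    nr (T0 t (A0inv z) - T0 t' (A0inv z)) <= MT * MT * `|t - t'| * nr z.
  move=> z; have [dw Lw Aw] := A0P z.
  have dT := (genT (A0inv z)).2 (conj dw Lw); rewrite Aw in dT.
  exact: lipT MT0 linT T00 semiT HMT' dT.
pose G a b := T0 (h - a) (A0inv (D0 (S b v))).
set Ka := MT * MT * MD * MS * nr v.
set Kb := MT * MA * MD * MS * MS * nr (B v).
have Ka0 : 0 <= Ka by rewrite mulr_ge0 // nr_ge0.
have Kb0 : 0 <= Kb by rewrite mulr_ge0 // nr_ge0.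
have inh : forall a, 0 <= a <= h -> 0 <= a <= tmax.
  move=> a /andP[a0 ah]; rewrite a0 /=; exact: le_trans ah htm.
have inhm : forall a, 0 <= a <= h -> 0 <= h - a <= tmax.
  move=> a /andP[a0 ah]; rewrite subr_ge0 ah /=; lra.
have keyG : forall a a' b b', 0 <= a <= h -> 0 <= a' <= h -> 0 <= b <= h -> 0 <= b' <= h ->
    nr (G a b - G a' b') <= Ka * `|a - a'| + Kb * `|b - b'|.
  move=> a a' b b' ha ha' hb hb'.
  have ha0 : 0 <= h - a by case/andP: (inhm _ ha).
  have e : G a b - G a' b' = T0 (h - a) (A0inv (D0 (S b v - S b' v))) +
      (T0 (h - a) (A0inv (D0 (S b' v))) - T0 (h - a') (A0inv (D0 (S b' v)))).
    by rewrite /G (linB _ _ linD) (linB _ _ linA) (linB _ _ (linT _ ha0)) addrA subrK.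
  rewrite e; apply: le_trans (nrD _ _) _; rewrite addrC; apply: lerD.
    apply: le_trans (lipTz _ _ _ (inhm _ ha) (inhm _ ha')) _.
    have -> : h - a - (h - a') = a' - a by ring.
    rewrite distrC /Ka.
    have h1 := HMD (S b' v); have h2 := HMS b' v (inh _ hb').
    have h3 : nr (D0 (S b' v)) <= MD * MS * nr v.
      by rewrite -mulrA; apply: le_trans h1 _; apply: ler_wpM2l.
    have h4 : 0 <= MT * MT * `|a - a'| by rewrite !mulr_ge0.
    apply: le_trans (ler_wpM2l h4 h3) _.
    rewrite le_eqVlt; apply/orP; left; apply/eqP; ring.
  apply: le_trans (HMT _ _ ha0) _.
  apply: le_trans (ler_wpM2l MT0 (HMA _)) _.
  rewrite mulrA; apply: le_trans (ler_wpM2l (mulr_ge0 MT0 MA0) (HMD _)) _.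
  have h5 := lipS _ _ (inh _ hb) (inh _ hb').
  have h6 : 0 <= MT * MA * MD by rewrite !mulr_ge0.
  rewrite mulrA; apply: le_trans (ler_wpM2l h6 h5) _.
  rewrite /Kb le_eqVlt; apply/orP; left; apply/eqP; ring.
have Lip : forall s s', 0 <= s <= h -> 0 <= s' <= h ->
    nr (G s s - G s' s') <= (Ka + Kb) * `|s - s'|.
  by move=> s s' hs hs'; apply: le_trans (keyG _ _ _ _ hs hs' hs hs') _; rewrite mulrDl.
have pw : forall s, 0 <= s <= h -> nr (G s s - G s0 s1) <= (Ka + Kb) * h.
  move=> s hs; apply: le_trans (keyG _ _ _ _ hs hs0 hs hs1) _.
  have d1 : `|s - s0| <= h.
    by case/andP: hs => ? ?; case/andP: hs0 => ? ?; rewrite ler_norml; apply/andP; split; lra.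
  have d2 : `|s - s1| <= h.
    by case/andP: hs => ? ?; case/andP: hs1 => ? ?; rewrite ler_norml; apply/andP; split; lra.
  rewrite mulrDl; apply: lerD; exact: ler_wpM2l.
have VB := vint_bound (g := fun s => G s s) h0 (addr_ge0 Ka0 Kb0) Lip pw.
rewrite (normE (B y)) (normE (B (B y))) -rmorphD /=.
rewrite normE -rmorphM lecR.
apply: le_trans VB _.
rewrite -/v.
have nv0 := nr_ge0 v; have nbv0 := nr_ge0 (B v).
have hh : 0 <= h * h by rewrite mulr_ge0.
have -> : C * h ^+ 2 * (nr v + nr (B v)) = (h * h) * (C * (nr v + nr (B v))) by rewrite expr2; ring.
have -> : h * ((Ka + Kb) * h) = (h * h) * (Ka + Kb) by ring.
apply: ler_wpM2l => //.
have q1 : 0 <= MT * MT * MD * MS * nr (B v) by rewrite mulr_ge0.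
have q2 : 0 <= MT * MA * MD * MS * MS * nr v by rewrite mulr_ge0.
rewrite /Ka /Kb /C mulrDl !mulrDr; lra.
Qed.
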